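(* Let $n\ge2$, let $k$ be an integer with $1\le k\le n$, and let $M$ be any mechanism that is DIC for capacity $k$. Define $\alpha=\frac{2k}{k+1}$ if $k\le\lceil (n-1)/2\rceil$, and $\alpha=\max\{\frac{n-1}{k+1},1\}$ otherwise. Then $M$ is at best an $\alpha$-approximation: for every $\alpha'<\alpha$ there exists a profile $\boldsymbol{x}\in[0,1]^n$ with $\Pi^*(\boldsymbol{x},k)>\alpha'\,\Pi_M(\boldsymbol{x},k)$.
   Context: There are $n$ agents $N=\{1,\dots,n\}$ with locations $x_i\in[0,1]$, profile $\boldsymbol{x}$. A mechanism is a deterministic function $M:[0,1]^n\to[0,1]$ giving the facility location from reported locations. The facility has capacity $k$. Given $\boldsymbol{x}$ and $s$, agent $i$ has higher priority than $j$ if $|s-x_i|<|s-x_j|$, ties broken by a fixed deterministic rule; $N_k^*(\boldsymbol{x},s)$ is the set of the $k$ highest-priority agents. Agent $i$'s ex-post equilibrium utility (of the subgame in which agents choose whether to travel to the capacity-$k$ facility, excess travellers rationed by priority) is $u_i^*(s,\boldsymbol{x},k)=1-|s-x_i|$ if $i\in N_k^*(\boldsymbol{x},s)$ and $0$ otherwise, computed at true locations. $M$ is DIC for capacity $k$ if for every $i$, every true profile $\boldsymbol{x}$, every $x_i'\in[0,1]$, and every reports $\hat{\boldsymbol{x}}_{-i}$ of the others, $u_i^*(M(x_i,\hat{\boldsymbol{x}}_{-i}),\boldsymbol{x},k)\ge u_i^*(M(x_i',\hat{\boldsymbol{x}}_{-i}),\boldsymbol{x},k)$. Optimal welfare: $\Pi^*(\boldsymbol{x},k)=\max_{s\in[0,1]}\sum_i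 u_i^*(s,\boldsymbol{x},k)$; mechanism welfare: $\Pi_M(\boldsymbol{x},k)=\sum_i u_i^*(M(\boldsymbol{x}),\boldsymbol{x},k)$. $M$ is an $\alpha$-approximation if $\max_{\boldsymbol{x}}\Pi^*(\boldsymbol{x},k)/\Pi_M(\boldsymbol{x},k)\le\alpha$. *)

(* Defs.v *)
From HB Require Import structures.
From mathcomp Require Import all_boot all_order all_algebra.
From mathcomp Require Import all_classical all_reals.
Set Implicit Arguments. Unset Strict Implicit. Unset Printing Implicit Defensive.
Import Order.TTheory GRing.Theory Num.Theory.
Local Open Scope ring_scope.
Local Open Scope classical_set_scope.

Section FL.
Variables (R : realType) (n : nat).

Definition profile := 'I_n -> R.

Definition in_unit (a : R) : bool := (0 <= a) && (a <= 1).
Definition in_cube (x : profile) : Prop := forall i, in_unit (x i).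

Definition higher (rk : 'I_n -> nat) (x : profile) (s : R) (j i : 'I_n) : bool :=
  (`|s - x j| < `|s - x i|) ||
  ((`|s - x j| == `|s - x i|) && (rk j < rk i)%N).

(* N_k^*(x,s): the k highest-priority agents, i.e. those with fewer than k
   agents of strictly higher priority. *)
Definition topk (rk : 'I_n -> nat) (k : nat) (x : profile) (s : R) (i : 'I_n) : bool :=
  (#|[set j | higher rk x s j i]| < k)%N.

Definition util (rk : 'I_n -> nat) (s : R) (x : profile) (k : nat) (i : 'I_n) : R :=
  if topk rk k x s i then 1 - `|s - x i| else 0.

Definition welfare (rk : 'I_n -> nat) (s : R) (x : profile) (k : nat) : R :=
  \sum_(i < n) util rk s x k i.

(* Optimal welfare Pi^*(x,k) = max over s in [0,1] (taken as the supremum). *)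
Definition opt_welfare (rk : 'I_n -> nat) (x : profile) (k : nat) : R :=
  sup [set welfare rk s x k | s in [set s : R | in_unit s]].

Definition mech_welfare (rk : 'I_n -> nat) (M : profile -> R) (x : profile) (k : nat) : R :=
  welfare rk (M x) x k.

Definition mechanism (M : profile -> R) : Prop :=
  forall x, in_cube x -> in_unit (M x).

Definition upd (xh : profile) (i : 'I_n) (a : R) : profile :=
  fun j => if j == i then a else xh j.

Definition DIC (rk : 'I_n -> nat) (M : profile -> R) (k : nat) : Prop :=
  forall (i : 'I_n) (x : profile) (x' : R) (xh : profile),
    in_cube x -> in_unit x' -> in_cube xh ->
    util rk (M (upd xh i (x i))) x k i >= util rk (M (upd xh i x')) x k i.

End FL.

Definition ceil_half (m : nat) : nat := (m.+1)./2.

Definition alpha_bound (R : realType) (n k : nat) : R :=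
  if (k <= ceil_half n.-1)%N then (2 * k%:R) / (k%:R + 1)
  else Num.max ((n.-1)%:R / (k%:R + 1)) 1.

(* Main.v *)
Require Import Defs.
From mathcomp Require Import all_boot all_order all_algebra.
From mathcomp Require Import all_classical all_reals.
From mathcomp Require Import lra zify.
Import Order.TTheory GRing.Theory Num.Theory.
Local Open Scope ring_scope.

Section Aux.
Variables (R : realType) (n : nat) (rk : 'I_n -> nat) (Hrk : injective rk).

Lemma card_lt_ord (k : nat) : (k <= n)%N -> #|finset (fun m : 'I_n => (m < k)%N)| = k.
Proof.
move=> kn.
have -> : finset (fun m : 'I_n => (m < k)%N) = (widen_ord kn) @: [set: 'I_k].
  apply/setP=> m; rewrite inE; apply/idP/imsetP.
    move=> mk; exists (Ordinal mk) => //; exact: val_inj.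
  by case=> j _ ->; rewrite /= ltn_ord.
rewrite card_imset ?cardsT ?card_ord //.
by move=> a b /(congr1 val) /= /val_inj.
Qed.

Variables (x : profile R n) (s : R).
Let hi := higher rk x s.

Lemma higher_irr i : ~~ hi i i.
Proof. by rewrite /hi /higher ltxx ltnn andbF. Qed.

Lemma higher_trans i j l : hi l j -> hi j i -> hi l i.
Proof.
rewrite /hi /higher => /orP[h1|/andP[/eqP e1 r1]] /orP[h2|/andP[/eqP e2 r2]].
- by rewrite (lt_trans h1 h2).
- by rewrite -e2 h1.
- by rewrite e1 h2.
- by rewrite e1 e2 eqxx (ltn_trans r1 r2) orbT.
Qed.

Lemma higher_total i j : i != j -> hi i j || hi j i.
Proof.
move=> ij; rewrite /hi /higher.
case: (ltgtP `|s - x i| `|s - x j|) => //= e.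
idtac.
have : rk i != rk j by apply: contra ij => /eqP /Hrk ->.
by rewrite neq_ltn.
Qed.

Definition pos i := #|finset (fun j => hi j i)|.

Lemma pos_lt i j : hi j i -> (pos j < pos i)%N.
Proof.
move=> h; apply: proper_card; apply/properP; split.
  by apply/fintype.subsetP=> l; rewrite !inE => /higher_trans; apply.
by exists j; rewrite !inE // higher_irr.
Qed.

Lemma pos_inj : injective pos.
Proof.
move=> i j e; apply/eqP; apply/negPn/negP => ij.
by case/orP: (@higher_total i j ij) => /pos_lt; rewrite e ltnn.
Qed.

Lemma pos_ltn i : (pos i < n)%N.
Proof.
rewrite -[n]card_ord -cardsT; apply: proper_card; apply/properP; split.
  by apply/fintype.subsetP => l; rewrite inE.
by exists i; rewrite !inE // higher_irr.
Qed.

Lemma topkE k i : topk rk k x s i = (pos i < k)%N.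
Proof.
rewrite /topk /pos /hi; congr (_ < _)%N; apply: eq_card => j; rewrite !inE /=.
by apply/idP/idP => h; [move: h; rewrite in_setE | rewrite in_setE].
Qed.

Lemma card_topk k : (k <= n)%N -> #|finset (fun i => topk rk k x s i)| = k.
Proof.
move=> kn.
pose pf (i : 'I_n) : 'I_n := Ordinal (pos_ltn i).
have pfi : injective pf by move=> a b /(congr1 val) /= /pos_inj.
rewrite -[RHS](@card_lt_ord k kn) -[RHS](card_preimset _ pfi).
by apply: eq_card => i; rewrite !inE /pf /= topkE.
Qed.


Lemma sum_ind (P : pred 'I_n) : \sum_i ((P i)%:R : R) = #|P|%:R.
Proof.
rewrite (bigID P) /= [X in _ + X]big1 ?addr0; last by move=> i /negbTE ->.
rewrite (eq_bigr (fun _ => 1)); last by move=> i ->.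
by rewrite sumr_const.
Qed.

Lemma dist_le1 (a b : R) : in_unit a -> in_unit b -> `|a - b| <= 1.
Proof.
rewrite /in_unit => /andP[a0 a1] /andP[b0 b1].
by rewrite ler_norml; apply/andP; split; lra.
Qed.

Hypothesis Hx : in_cube x.
Hypothesis Hs : in_unit s.

Lemma util_ge0 k i : 0 <= util rk s x k i.
Proof.
rewrite /util; case: ifP => // _.
by rewrite subr_ge0; apply: dist_le1.
Qed.

Lemma mech_bound k i0 : (k <= n)%N ->
  (forall i, i != i0 -> 1/2 <= `|s - x i|) ->
  welfare rk s x k <= (k%:R + 1) / 2.
Proof.
move=> kn hd.
apply: (@le_trans _ _ (\sum_i (((topk rk k x s i)%:R : R) / 2 + ((i == i0)%:R : R) / 2))).
  apply: ler_sum => i _; rewrite /util.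
  have hn := normr_ge0 (s - x i).
  case: ifP => tk; case: (i =P i0) => [_|/eqP ne] /=.
  - lra.
  - by have := hd _ ne; lra.
  - lra.
  - lra.
rewrite big_split /= -!mulr_suml sum_ind sum_ind.
have -> : #|(fun i => topk rk k x s i)| = k.
  rewrite -[RHS](card_topk k kn); apply: eq_card => i. by rewrite inE.
have -> : #|(fun i => i == i0)| = 1%N by apply: card1.
lra.
Qed.


Lemma util_le1 k i : util rk s x k i <= 1.
Proof.
rewrite /util; case: ifP => _ //; have := normr_ge0 (s - x i); lra.
Qed.

Lemma welfare_ge_min k : (k <= n)%N ->
  (minn #|finset (fun i => x i == s)| k)%:R <= welfare rk s x k.
Proof.
move=> kn.
apply: (@le_trans _ _ (\sum_i ((((x i == s) && topk rk k x s i))%:R : R))); last first.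
  apply: ler_sum => i _.
  case: (x i =P s) => [e|_] /=; last by rewrite util_ge0.
  by rewrite /util; case: ifP => // _; rewrite e subrr normr0 subr0.
rewrite sum_ind ler_nat.
have hE : forall i, x i == s -> forall j, hi j i -> x j == s.
  move=> i /eqP ei j; rewrite /hi /higher ei subrr normr0 ltNge normr_ge0 /=.
  by rewrite normr_eq0 subr_eq0 => /andP[/eqP -> _].
case: (leqP #|finset (fun i => x i == s)| k) => hk.
  apply: subset_leq_card; apply/fintype.subsetP => i.
  rewrite inE => xi; rewrite unfold_in /= xi /= topkE.
  apply: (leq_trans _ hk); apply: proper_card; apply/properP; split.
    by apply/fintype.subsetP => j; rewrite !inE; apply: hE.
  by exists i; rewrite !inE // higher_irr.
apply: (@leq_trans #|finset (fun i => topk rk k x s i)|); first by rewrite card_topk.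
apply: subset_leq_card; apply/fintype.subsetP => i; rewrite inE => ti.
rewrite unfold_in /= ti andbT.
apply/negPn/negP => ne; move: ti; rewrite topkE => ti.
have : (#|finset (fun i => x i == s)| <= pos i)%N.
  apply: subset_leq_card.
  apply/fintype.subsetP => j; rewrite !inE => /eqP ej.
  by rewrite /hi /higher ej subrr normr0 normr_gt0 subr_eq0 eq_sym ne.
move: ti hk; clear; lia.
Qed.

End Aux.

Section Main.
Variables (R : realType) (n : nat) (rk : 'I_n -> nat) (Hrk : injective rk).
Variables (k : nat) (M : profile R n -> R) (HM : mechanism M) (HDIC : DIC rk M k).

Lemma welfare_le_opt (x : profile R n) (e : R) : in_cube x -> in_unit e ->
  welfare rk e x k <= opt_welfare rk x k.
Proof.
move=> Hx He; apply: sup_upper_bound; last by exists e.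
split; first by exists (welfare rk e x k); exists e.
exists n%:R => _ [t Ht <-].
apply: (@le_trans _ _ (\sum_(i < n) (1 : R))).
  by apply: ler_sum => i _; apply: util_le1.
by rewrite sumr_const card_ord.
Qed.


Lemma L1 (Hkn : (k < n)%N) (Hk : (0 < k)%N) i (xh : profile R n) a b :
  in_cube xh -> in_unit a -> in_unit b ->
  `|M (upd xh i a) - M (upd xh i b)| <= `|M (upd xh i a) - b|.
Proof.
move=> Hxh Ha Hb.
have cube_upd : forall c, in_unit c -> in_cube (upd xh i c).
  by move=> c Hc j; rewrite /upd; case: ifP.
have H1 : in_unit (M (upd xh i b)) := HM _ (cube_upd _ Hb).
have H2 : in_unit (M (upd xh i a)) := HM _ (cube_upd _ Ha).
set s1 := M (upd xh i b) in H1 *; set s2 := M (upd xh i a) in H2 *.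
rewrite leNgt; apply/negP => hlt.
pose x : profile R n := upd (fun _ => s1) i b.
have Hx : in_cube x by move=> j; rewrite /x /upd; case: ifP.
have := HDIC i x a xh Hx Ha Hxh.
have xib : x i = b by rewrite /x /upd eqxx.
rewrite xib.
rewrite -/s1 -/s2.
have hb1 : b != s1 by apply/eqP => e; move: hlt; rewrite e ltxx.
have u1 : util rk s1 x k i = 0.
  rewrite /util topkE ifN // -leqNgt /pos.
  apply: (@leq_trans #|[set~ i]|); first by rewrite cardsC1 card_ord; move: Hkn; clear; lia.
  apply: subset_leq_card; apply/fintype.subsetP => j; rewrite !inE => ji.
  rewrite /higher /x /upd (negbTE ji) eqxx subrr normr0 normr_gt0 subr_eq0 eq_sym.
  by rewrite hb1.
have u2 : util rk s2 x k i = 1 - `|s2 - b|.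
  rewrite /util topkE xib ifT // /pos.
  suff -> : #|finset (fun j => higher rk x s2 j i)| = 0%N by [].
  apply: eq_card0 => j; rewrite !inE /higher.
  case: (j =P i) => [->|/eqP ji]; first by rewrite ltxx ltnn andbF.
  rewrite /x /upd (negbTE ji) eqxx ltNge (ltW hlt) /=.
  by rewrite (gt_eqF hlt).
rewrite u1 u2; have := @dist_le1 R _ _ H2 H1; rewrite -/s1 -/s2 => h; lra.
Qed.

End Main.

Lemma numeric (R : realType) n k (a : R) : (2 <= n)%N -> (1 <= k)%N -> (k <= n)%N ->
  1 <= a -> a < alpha_bound R n k ->
  (k < n)%N /\ forall m, (n <= m.*2.+1)%N -> a * ((k%:R + 1) / 2) < (minn m k)%:R.
Proof.
move=> n2 k1 kn a1; rewrite /alpha_bound /ceil_half.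
have k0 : (0 : R) < k%:R + 1 by have := ler0n R k; lra.
case: ifP => hA.
  rewrite ltr_pdivlMr // => ha; split; first by move: n2 k1 hA; clear; lia.
  move=> m hm.
  have -> : minn m k = k by apply/minn_idPr; move: n2 hA hm; clear; lia.
  lra.
move/negbT: hA => hA.
rewrite lt_max => /orP[|]; last by lra.
rewrite ltr_pdivlMr // => ha.
have n1 : (n.-1)%:R = n%:R - 1 :> R by rewrite -[in RHS](prednK (ltnW n2)) -natr1 addrK.
rewrite n1 in ha.
have hk2 : (2 * k%:R : R) >= n%:R + 1.
  have : (n.+1 <= k.*2)%N by move: n2 hA; clear; lia.
  by rewrite -(ler_nat R) -mul2n natrM -natr1; lra.
split.
  have : (k.+2 < n.+1)%N; last by clear; lia.
  rewrite -(ltr_nat R) -!natr1; nra.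
move=> m hm.
have hm' : (n%:R : R) <= 2 * m%:R + 1.
  by move: hm; rewrite -(ler_nat R) -natr1 -mul2n natrM; lra.
case: (leqP m k) => _; nra.
Qed.


Section Key.
Variables (R : realType) (n : nat) (rk : 'I_n -> nat) (Hrk : injective rk).
Variables (k : nat) (M : profile R n -> R) (HM : mechanism M).
Variables (kn : (k <= n)%N) (a : R) (a0 : 0 < a).
Hypothesis Hnum : forall m, (n <= m.*2.+1)%N -> a * ((k%:R + 1) / 2) < (minn m k)%:R.

Lemma key (x : profile R n) i0 : in_cube x ->
  (forall i, i != i0 -> (x i == 0%R) || (x i == 1%R)) ->
  (forall i, i != i0 -> 1/2 <= `|M x - x i|) ->
  a * mech_welfare rk M x k < opt_welfare rk x k.
Proof.
move=> Hx h01 hd.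
have Hs := HM _ Hx.
have hm : welfare rk (M x) x k <= (k%:R + 1) / 2.
  exact: (@mech_bound R n rk Hrk x (M x) k i0 kn hd).
pose E0 := finset (fun i => x i == 0%R).
pose E1 := finset (fun i => x i == 1%R).
pose E2 := finset (fun i => i == i0).
have hcnt : (n <= #|E0| + #|E1| + 1)%N.
  have c2 : #|E2| = 1%N.
    by rewrite -(card1 i0); apply: eq_card => i; rewrite inE.
  have h1 : (#|E0 :|: E1 :|: E2| <= #|E0| + #|E1| + 1)%N.
    rewrite -c2; apply: (leq_trans (leq_card_setU _ _)).
    by rewrite leq_add2r leq_card_setU.
  apply: leq_trans h1.
  rewrite -[X in (X <= _)%N]card_ord -cardsT; apply: subset_leq_card.
  apply/fintype.subsetP => i _; rewrite !inE.
  by apply/orP; case: (boolP (i == i0)) => [e|/h01 h]; [right | left].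
have U1 : in_unit (1 : R) by rewrite /in_unit ler01 lexx.
have U0 : in_unit (0 : R) by rewrite /in_unit lexx ler01.
have [e [m [He hmn hw]]] : exists e, exists m, [/\ in_unit e, (n <= m.*2.+1)%N &
    (minn m k)%:R <= welfare rk e x k].
  case: (leqP #|E0| #|E1|) => h.
    exists 1, #|E1|; split => //.
    - by move: hcnt h; clear; lia.
    - exact: (@welfare_ge_min R n rk Hrk x 1 Hx U1 k kn).
  exists 0, #|E0|; split => //.
  - by move: hcnt h; clear; lia.
  - exact: (@welfare_ge_min R n rk Hrk x 0 Hx U0 k kn).
have ho := @welfare_le_opt R n rk k x e Hx He.
have hn := Hnum m hmn.
rewrite /mech_welfare.
have : a * welfare rk (M x) x k <= a * ((k%:R + 1) / 2) by rewrite ler_pM2l.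
lra.
Qed.

End Key.

Theorem theorem4p3 (R : realType) (n k : nat) (rk : 'I_n -> nat)
  (Hrk : injective rk) (Hn : (2 <= n)%N) (Hk1 : (1 <= k)%N) (Hkn : (k <= n)%N)
  (M : profile R n -> R) (HM : mechanism M) (HDIC : DIC rk M k) :
  forall alpha' : R, alpha' < alpha_bound R n k ->
  exists x : profile R n, in_cube x /\
    opt_welfare rk x k > alpha' * mech_welfare rk M x k.
Proof.
move=> a ha.
have U0 : in_unit (0 : R) by rewrite /in_unit lexx ler01.
have U1 : in_unit (1 : R) by rewrite /in_unit ler01 lexx.
have Uh : in_unit (1/2 : R) by rewrite /in_unit; apply/andP; split; lra.
case: (ltP a 1) => ha1.
  pose x0 : profile R n := fun _ => 0.
  have Hx0 : in_cube x0 by move=> i; rewrite /x0.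
  exists x0; split => //.
  have hmin := @welfare_ge_min R n rk Hrk x0 0 Hx0 U0 k Hkn.
  have cE : #|finset (fun i => x0 i == 0%R)| = n.
    by rewrite -[RHS]card_ord; apply: eq_card => i; rewrite inE /x0 eqxx.
  rewrite cE (minn_idPr Hkn) in hmin.
  have hk : (1 : R) <= k%:R by rewrite ler1n.
  have hle := @welfare_le_opt R n rk k x0 _ Hx0 (HM _ Hx0).
  have hge : 0 <= welfare rk (M x0) x0 k.
    by apply: sumr_ge0 => i _; apply: util_ge0 => //; apply: HM.
  have ho := @welfare_le_opt R n rk k x0 0 Hx0 U0.
  rewrite /mech_welfare.
  case: (lerP a 0) => h; nra.
have [kn hnum] := @numeric R n k a Hn Hk1 Hkn ha1 ha.
have a0 : 0 < a by lra.
have K := @key R n rk Hrk k M HM Hkn a a0 hnum.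
pose Q (j : nat) : profile R n := fun i => if (i < j)%N then 1 else 0.
have HQ : forall j, in_cube (Q j) by move=> j i; rewrite /Q; case: ifP.
have n0 : (0 < n)%N by move: Hn; clear; lia.
pose i00 : 'I_n := Ordinal n0.
have hM : forall x, in_cube x -> 0 <= M x <= 1 by move=> x hx; apply: HM.
case: (lerP (1/2) (M (Q 0%N))) => h0.
  exists (Q 0%N); split => //; apply: (K _ i00) => // i _.
    by rewrite /Q ltn0 eqxx.
  have := hM _ (HQ 0%N); rewrite /Q ltn0 ler_normr => /andP[? ?].
  by apply/orP; left; lra.
case: (lerP (M (Q n)) (1/2)) => hn'.
  exists (Q n); split => //; apply: (K _ i00) => // i _.
    by rewrite /Q ltn_ord eqxx orbT.
  have := hM _ (HQ n); rewrite /Q ltn_ord ler_normr => /andP[? ?].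
  by apply/orP; right; lra.
have exP : exists j, (1/2 <= M (Q j)) by exists n; apply: ltW.
case: (ex_minnP exP) => j1 hj1 hmin.
have j1n : (j1 <= n)%N by apply: hmin; apply: ltW.
have j10 : (0 < j1)%N.
  by case: j1 hj1 {hmin j1n} => // h; move: h0; rewrite ltNge h.
have hjn : (j1.-1 < n)%N by move: j1n j10; clear; lia.
have hs : M (Q j1.-1) < 1/2.
  rewrite ltNge; apply/negP => h.
  by have := hmin _ h; move: j10; clear; lia.
pose i0 : 'I_n := Ordinal hjn.
have Qj0 : upd (Q j1.-1) i0 0 = Q j1.-1.
  apply: funext => i; rewrite /upd /Q; case: (i =P i0) => [->|] //=.
  by rewrite ltnn.
have Qj1 : upd (Q j1.-1) i0 1 = Q j1.
  apply: funext => i; rewrite /upd /Q; case: (i =P i0) => [->|ne] /=.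
    by move: j10; clear => h; rewrite ifT //; lia.
  have nv : (nat_of_ord i <> j1.-1).
    by move=> e; apply: ne; apply: val_inj.
  have -> : (i < j1)%N = (i < j1.-1)%N.
    by apply/idP/idP => h; lia.
  by [].
have hA := @L1 R n rk k M HM HDIC kn Hk1 i0 (Q j1.-1) 0 (1/2) (HQ _) U0 Uh.
have hB := @L1 R n rk k M HM HDIC kn Hk1 i0 (Q j1.-1) 1 (1/2) (HQ _) U1 Uh.
rewrite Qj0 Qj1 in hA hB.
set u := M (upd (Q j1.-1) i0 (1/2)) in hA hB.
have hu : u = 1/2.
  move: hA hB; rewrite (ltr0_norm (x := M (Q j1.-1) - 1/2)) ?subr_lt0 //.
  rewrite (ger0_norm (x := M (Q j1) - 1/2)) ?subr_ge0 //.
  rewrite !ler_norml => /andP[h1 h2] /andP[h3 h4].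
  lra.
have HX : in_cube (upd (Q j1.-1) i0 (1/2)).
  by move=> i; rewrite /upd; case: ifP => // _; apply: HQ.
exists (upd (Q j1.-1) i0 (1/2)); split => //; apply: (K _ i0) => // i ne.
  by rewrite /upd (negbTE ne) /Q; case: ifP; rewrite eqxx ?orbT.
rewrite -/u hu /upd (negbTE ne) /Q ler_normr; case: ifP => _; apply/orP.
  by right; lra.
by left; lra.
Qed.
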